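(* Let $X$ be a nonnegative integer-valued random variable whose PGF $X(z)$ has radius of convergence $r>1$, with mean $\mu=X'(1)>0$ and variance $\sigma^2>0$, such that $|X(z)|<X(r_1)$ whenever $|z|=r_1$, $z\ne r_1$, $r_1\in(0,r)$. For positive integers $n,s$ let $A(z)=X(z)^n$, with $n\mu<s$ and degree of $X(z)$ larger than $s/n$, and let $Z_0$ be the zero of $z^s-A(z)$ of minimal modulus in $1<|z|<r$. Suppose $\frac{n\mu}{s}=1-\frac{\gamma}{\sqrt s}$ with $\gamma$ bounded away from $0$ and $\infty$ as $s\to\infty$. Then, as $s\to\infty$, $$\frac{1}{Z_0^{N+1}}=\exp\Big(\frac{-2L\gamma\mu}{\sigma^2}\Big)\big(1+O(s^{-1/2})\big)$$ whenever $N+1=L\sqrt{s}$ with $L>0$ bounded away from $0$ and $\infty$.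
   Context: $\sigma^2=X''(1)-X'(1)^2+X'(1)$. $Z_0$ is real and larger than $1$. $O$-terms refer to $s\to\infty$ with constants independent of $s$. *)

(* Defs.v *)
From Stdlib Require Import Reals.
From Coquelicot Require Import Coquelicot.
Open Scope R_scope.

(* A nonnegative integer-valued random variable X is represented by its
   distribution p k = P(X = k).  Its PGF is X(z) = sum_k p k z^k. *)
Definition is_distribution (p : nat -> R) : Prop :=
  (forall k, 0 <= p k) /\ is_series p 1.

Definition pgf (p : nat -> R) (x : R) : R := PSeries p x.
Definition pgf_radius (p : nat -> R) : Rbar := CV_radius p.

(* Complex PGF X(z) = sum_k p k z^k, computed componentwise
   (real coefficients, so Re and Im are the series of Re/Im of the terms). *)
Definition pgfC (p : nat -> R) (z : C) : C :=
  (Series (fun k => p k * fst (Cpow z k)), Series (fun k => p k * snd (Cpow z k))).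

Definition pgf_mean (p : nat -> R) : R := Derive (pgf p) 1.
Definition pgf_var (p : nat -> R) : R :=
  Derive_n (pgf p) 2 1 - (pgf_mean p) ^ 2 + pgf_mean p.

Definition pgf_degree_gt (p : nat -> R) (d : R) : Prop :=
  exists k : nat, p k <> 0 /\ d < INR k.

Definition annulus_zero (p : nat -> R) (n s : nat) (z : C) : Prop :=
  1 < Cmod z /\ Rbar_lt (Cmod z) (pgf_radius p) /\
  Cpow z s = Cpow (pgfC p z) n.

(* Main.v *)
Require Import Defs.
From Stdlib Require Import Reals Lra Psatz Classical.
From Coquelicot Require Import Coquelicot.
Open Scope R_scope.


Lemma Rabs_le_inv (a b : R) : Rabs a <= b -> - b <= a <= b.
Proof. unfold Rabs; destruct (Rcase_abs a); lra. Qed.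

Lemma taylor2 (f : R -> R) (x y M : R) : x <= y ->
  (forall t, x <= t <= y -> forall k, (k <= 3)%nat -> ex_derive_n f k t) ->
  (forall t, x <= t <= y -> Rabs (Derive_n f 3 t) <= M) ->
  Rabs (f y - f x - (y-x) * Derive_n f 1 x - (y-x)^2/2 * Derive_n f 2 x) <= M/6*(y-x)^3.
Proof.
  intros Hxy Hd HM.
  destruct (Req_dec x y) as [<-|Hne].
  { assert (E: (x - x) = 0) by lra. rewrite E. 
    match goal with |- Rabs ?e <= _ => assert (Ee : @eq R e 0) by (unfold Rdiv; ring); rewrite Ee end.
    rewrite Rabs_R0. unfold Rdiv; ring_simplify. lra. }
  destruct (Taylor_Lagrange f 2 x y) as [z [Hz Heq]]; [lra|exact Hd|].
  rewrite Heq. unfold sum_f_R0. change (Derive_n f 0 x) with (f x).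
  replace (INR (Factorial.fact 0)) with 1 by (simpl; lra).
  replace (INR (Factorial.fact 1)) with 1 by (simpl; lra).
  replace (INR (Factorial.fact 2)) with 2 by (simpl; lra).
  replace (INR (Factorial.fact 3)) with 6 by (simpl; lra).
  match goal with |- Rabs ?e <= _ => assert (Ee : @eq R e ((y-x)^3/6 * Derive_n f 3 z)) end.
  { generalize (Derive_n f 1 x) (Derive_n f 2 x) (Derive_n f 3 z) (f x). intros. field. }
  rewrite Ee.
  rewrite Rabs_mult. rewrite (Rabs_right ((y-x)^3/6)).
  2:{ apply Rle_ge. apply Rmult_le_pos; [apply pow_le; lra| lra]. }
  assert (0 <= (y-x)^3) by (apply pow_le; lra).
  assert (Rabs (Derive_n f 3 z) <= M) by (apply HM; lra).
  nra.
Qed.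


Lemma Dn_exp k t : Derive_n exp k t = exp t.
Proof. apply is_derive_n_unique, is_derive_n_exp. Qed.

Lemma exn_exp k t : ex_derive_n exp k t.
Proof.
  destruct k as [|k]; [exact I|]. simpl.
  apply ex_derive_ext with exp. { intros; symmetry; apply Dn_exp. }
  auto_derive; auto.
Qed.

Lemma exp_taylor (Y y : R) : 0 <= y <= Y ->
  Rabs (exp y - 1 - y - y^2/2) <= exp Y / 6 * y^3.
Proof.
  intros Hy.
  pose proof (taylor2 exp 0 y (exp Y) (proj1 Hy)) as H.
  rewrite !Dn_exp, exp_0, Rminus_0_r, !Rmult_1_r in H.
  apply H.
  - intros; apply exn_exp.
  - intros t Ht. rewrite Dn_exp. rewrite Rabs_pos_eq by (left; apply exp_pos).
    destruct (Rle_lt_or_eq_dec t Y) as [h|h]; [lra| left; apply exp_increasing; exact h| rewrite h; lra].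
Qed.


Lemma radius_delta (a : nat -> R) : Rbar_lt 1 (CV_radius a) ->
  exists d, 0 < d <= 1 /\ Rbar_lt (1 + d) (CV_radius a).
Proof.
  destruct (CV_radius a) as [r| |] eqn:E; simpl; intros H.
  - exists (Rmin 1 ((r-1)/2)). split.
    + split; [apply Rmin_glb_lt; lra| apply Rmin_l].
    + pose proof (Rmin_r 1 ((r-1)/2)). lra.
  - exists 1. split; [lra|exact I].
  - contradiction.
Qed.

Lemma in_rad (a : nat -> R) (x y : R) : 0 <= x <= y -> Rbar_lt y (CV_radius a) ->
  Rbar_lt (Rabs x) (CV_radius a).
Proof.
  intros Hx Hy. rewrite Rabs_pos_eq by lra.
  apply Rbar_le_lt_trans with y; [simpl; lra| exact Hy].
Qed.

Lemma Series0 : Series (fun _ => 0) = 0.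
Proof.
  rewrite (Series_ext (fun _ => 0) (fun n => 0 * 0)) by (intros; ring).
  rewrite Series_scal_l. ring.
Qed.

Lemma PS_mono (a : nat -> R) (x y : R) : (forall k, 0 <= a k) -> 0 <= x <= y ->
  Rbar_lt y (CV_radius a) -> 0 <= PSeries a x <= PSeries a y.
Proof.
  intros Ha Hx Hy.
  assert (Hr : Rbar_lt (Rabs y) (CV_radius a)) by (apply (in_rad a y y); lra || auto).
  assert (Hex : ex_series (fun k => a k * y ^ k)).
  { apply ex_series_ext with (fun k => Rabs (a k * y ^ k)); [|apply CV_disk_inside; auto].
    intros k. apply Rabs_pos_eq. apply Rmult_le_pos; [auto| apply pow_le; lra]. }
  split.
  - unfold PSeries. rewrite <- Series0.
    apply Series_le.
    + intros k; split; [lra| apply Rmult_le_pos; [auto| apply pow_le; lra]].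
    + apply ex_series_ext with (fun k => Rabs (a k * x ^ k)); [|apply CV_disk_inside; apply (in_rad a x y); auto].
      intros k. apply Rabs_pos_eq. apply Rmult_le_pos; [auto| apply pow_le; lra].
  - unfold PSeries. apply Series_le; [|exact Hex].
    intros k; split; [apply Rmult_le_pos; [auto| apply pow_le; lra]|].
    apply Rmult_le_compat_l; [auto|]. apply pow_incr; lra.
Qed.

Lemma pgf1 p : is_distribution p -> pgf p 1 = 1.
Proof.
  intros [_ H]. unfold pgf, PSeries.
  rewrite (Series_ext _ p) by (intros; rewrite pow1; ring).
  apply is_series_unique; exact H.
Qed.

Lemma PSdn_pos (a : nat -> R) n : (forall k, 0 <= a k) -> forall k, 0 <= PS_derive_n n a k.
Proof.
  intros Ha k. unfold PS_derive_n. apply Rmult_le_pos; [|auto].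
  apply Rmult_le_pos; [apply pos_INR| left; apply Rinv_0_lt_compat, lt_0_INR, Factorial.lt_O_fact].
Qed.

Lemma X_taylor p : is_distribution p -> Rbar_lt 1 (pgf_radius p) ->
  exists d M, 0 < d <= 1 /\ Rbar_lt (1 + d) (pgf_radius p) /\ 0 <= M /\
  (forall u, 0 <= u <= d ->
  Rabs (pgf p (1+u) - 1 - u * pgf_mean p - u^2/2 * Derive_n (pgf p) 2 1) <= M * u^3).
Proof.
  intros Hd Hr. unfold pgf_radius in *.
  destruct (radius_delta p Hr) as [d [Hd1 Hd2]].
  assert (Hp : forall k, 0 <= p k) by apply Hd.
  exists d, (PSeries (PS_derive_n 3 p) (1+d) / 6). split; [auto|split;[auto|split]].
  { pose proof (PS_mono (PS_derive_n 3 p) 0 (1+d) (PSdn_pos p 3 Hp)) as H.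
    rewrite CV_radius_derive_n in H. specialize (H ltac:(lra) Hd2). lra. }
  intros u Hu.
  pose proof (taylor2 (pgf p) 1 (1+u) (PSeries (PS_derive_n 3 p) (1+d)) ltac:(lra)) as H.
  rewrite pgf1 in H by auto. replace (1 + u - 1) with u in H by ring.
  replace (PSeries (PS_derive_n 3 p) (1 + d) / 6 * u ^ 3) with (PSeries (PS_derive_n 3 p) (1 + d) / 6 * u ^ 3) by ring.
  apply H.
  - intros t Ht k _. change (ex_derive_n (PSeries p) k t).
    apply ex_derive_n_PSeries. apply (in_rad p t (1+d)); auto; lra.
  - intros t Ht. change (Rabs (Derive_n (PSeries p) 3 t) <= PSeries (PS_derive_n 3 p) (1 + d)).
    rewrite Derive_n_PSeries by (apply (in_rad p t (1+d)); auto; lra).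
    pose proof (PS_mono (PS_derive_n 3 p) t (1+d) (PSdn_pos p 3 Hp)) as H2.
    rewrite CV_radius_derive_n in H2. specialize (H2 ltac:(lra) Hd2).
    rewrite Rabs_pos_eq; lra.
Qed.


Lemma phi_taylor p : is_distribution p -> Rbar_lt 1 (pgf_radius p) ->
  exists tau C0, 0 < tau <= 1/2 /\ Rbar_lt (exp tau) (pgf_radius p) /\ 0 <= C0 /\
  (forall t, 0 <= t <= tau ->
    Rabs (pgf p (exp t) - 1 - pgf_mean p * t - (pgf_var p + pgf_mean p ^ 2)/2 * t^2) <= C0 * t^3).
Proof.
  intros Hd Hr.
  destruct (X_taylor p Hd Hr) as [d [M [Hd1 [Hd2 [HM HX]]]]].
  set (mu := pgf_mean p). set (D2 := Derive_n (pgf p) 2 1).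
  exists (d/2), (8*M + Rabs mu / 2 + 3 * Rabs D2 / 2).
  assert (He : forall t, 0 <= t <= 1 -> Rabs (exp t - 1 - t - t^2/2) <= t^3/2).
  { intros t Ht. pose proof (exp_taylor 1 t Ht). pose proof exp_le_3.
    assert (0 <= t^3) by (apply pow_le; lra). 
    apply Rle_trans with (exp 1 / 6 * t ^ 3); [auto|]. nra. }
  assert (Hu : forall t, 0 <= t <= 1 -> t <= exp t - 1 <= t + t^2 /\ t + t^2 <= 2 * t).
  { intros t Ht. specialize (He t Ht). apply Rabs_le_inv in He.
    assert (t^3 <= t^2) by (simpl; nra). assert (t^2 <= t) by (simpl; nra).
    assert (0 <= t^2) by (simpl; nra). lra. }
  split; [lra|split;[|split]].
  - apply Rbar_le_lt_trans with (1 + d); [|exact Hd2].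
    simpl. specialize (Hu (d/2) ltac:(lra)). lra.
  - pose proof (Rabs_pos mu); pose proof (Rabs_pos D2); lra.
  - intros t Ht.
    specialize (Hu t ltac:(lra)). specialize (He t ltac:(lra)).
    set (u := exp t - 1) in *.
    assert (Hu0 : 0 <= u <= d) by lra.
    specialize (HX u Hu0). replace (1 + u) with (exp t) in HX by (unfold u; ring).
    assert (Hs : pgf_var p + mu ^ 2 = D2 + mu) by (unfold pgf_var; fold mu D2; ring).
    rewrite Hs.
    assert (Ee : pgf p (exp t) - 1 - mu * t - (D2 + mu) / 2 * t ^ 2 =
      (pgf p (exp t) - 1 - u * mu - u ^ 2 / 2 * D2) + mu * (u - t - t^2/2) + D2/2 * ((u - t) * (u + t)))
      by (unfold u; field).
    rewrite Ee.
    assert (Hu3 : u ^ 3 <= 8 * t^3) by (replace (8 * t^3) with ((2*t)^3) by ring; apply pow_incr; lra).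
    assert (Hw : 0 <= (u - t) * (u + t) <= 3 * t^3).
    { assert (0 <= u - t <= t^2) by lra. assert (0 <= u + t <= 3 * t) by lra.
      split; [nra|]. replace (3 * t^3) with (t^2 * (3 * t)) by ring.
      apply Rmult_le_compat; lra. }
    eapply Rle_trans; [apply Rabs_triang|].
    eapply Rle_trans; [apply Rplus_le_compat_r; apply Rabs_triang|].
    rewrite !Rabs_mult. fold mu D2 in HX.
    rewrite (Rabs_pos_eq (u-t)), (Rabs_pos_eq (u+t)) by lra.
    replace (Rabs (D2/2)) with (Rabs D2 * /2) by (unfold Rdiv; rewrite Rabs_mult, (Rabs_pos_eq (/2)) by lra; ring).
    assert (0 <= t^3) by (apply pow_le; lra).
    pose proof (Rabs_pos mu); pose proof (Rabs_pos D2).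
    assert (A1 : M * u^3 <= 8 * M * t^3) by nra.
    assert (A2 : Rabs mu * Rabs (u - t - t^2/2) <= Rabs mu * (t^3/2)).
    { apply Rmult_le_compat_l; [lra|]. exact He. }
    assert (A3 : Rabs D2 * /2 * ((u - t) * (u + t)) <= Rabs D2 * /2 * (3 * t^3)).
    { apply Rmult_le_compat_l; [|lra]. apply Rmult_le_pos; lra. }
    nra.
Qed.


Lemma D_bound (F : R -> R) mu s2 C0 beta t :
  0 < mu -> 0 <= C0 -> 0 < beta <= mu -> 0 <= t <= 1/2 ->
  Rabs (F t - 1 - mu*t - (s2+mu^2)/2*t^2) <= C0*t^3 ->
  Rabs (F t - exp ((mu+beta)*t) - (-beta*t + s2/2*t^2)) <= (C0 + 2*mu^3*exp mu)*t^3 + 2*mu*beta*t^2.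
Proof.
  intros Hmu HC Hb Ht HF.
  set (a := mu + beta).
  assert (Hy : 0 <= a * t <= mu) by (unfold a; nra).
  pose proof (exp_taylor mu (a*t) Hy) as He.
  assert (Ee : F t - exp (a*t) - (-beta*t + s2/2*t^2) =
     (F t - 1 - mu*t - (s2+mu^2)/2*t^2) - (exp (a*t) - 1 - a*t - (a*t)^2/2) - beta*(2*mu+beta)/2*t^2)
    by (unfold a; field).
  rewrite Ee.
  assert (Hat : (a*t)^3 <= 8 * mu^3 * t^3).
  { replace (8*mu^3*t^3) with ((2*mu*t)^3) by ring. apply pow_incr. unfold a; nra. }
  assert (Hexp : exp mu / 6 * (a*t)^3 <= 2 * mu^3 * exp mu * t^3).
  { pose proof (exp_pos mu). assert (0 <= mu^3*t^3) by (apply Rmult_le_pos; apply pow_le; lra). nra. }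
  assert (Hq : 0 <= beta*(2*mu+beta)/2*t^2 <= 2*mu*beta*t^2).
  { assert (0 <= t^2) by (apply pow_le; lra). split.
    - apply Rmult_le_pos; [|lra]. apply Rmult_le_pos; [|lra]. nra.
    - assert (beta*(2*mu+beta)/2 <= 2*mu*beta) by nra. nra. }
  eapply Rle_trans; [apply Rabs_triang|].
  rewrite Rabs_Ropp, (Rabs_pos_eq (beta*(2*mu+beta)/2*t^2)) by lra.
  eapply Rle_trans; [apply Rplus_le_compat_r; apply Rabs_triang|].
  rewrite Rabs_Ropp. lra.
Qed.

Definition cA mu C0 := C0 + 2*mu^3*exp mu.
Definition cP mu s2 C0 := 16 * cA mu C0 / s2^2 + 8*mu/s2.
Definition kap mu s2 C0 := 2 * cP mu s2 C0 / s2 + 1.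
Definition bstar mu s2 tau C0 := Rmin mu (Rmin (tau*s2/4) (1/(kap mu s2 C0 * s2))).

Lemma root_signs (F : R -> R) mu s2 tau C0 beta :
  0 < mu -> 0 < s2 -> 0 <= C0 -> 0 < tau <= 1/2 ->
  (forall t, 0 <= t <= tau -> Rabs (F t - 1 - mu*t - (s2+mu^2)/2*t^2) <= C0*t^3) ->
  0 < beta <= bstar mu s2 tau C0 ->
  let D := fun t => F t - exp ((mu+beta)*t) in
  let tlo := 2*beta/s2 - kap mu s2 C0 * beta^2 in
  let thi := 2*beta/s2 + kap mu s2 C0 * beta^2 in
  (forall t, 0 < t <= tlo -> D t < 0) /\ 0 < D thi /\ 0 < tlo /\ tlo < thi /\ thi <= tau.
Proof.
  intros Hmu Hs HC Htau HF Hb D tlo thi.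
  assert (HA : 0 <= cA mu C0).
  { unfold cA. pose proof (exp_pos mu). assert (0 <= mu^3) by (apply pow_le; lra). nra. }
  assert (HP : 0 <= cP mu s2 C0).
  { unfold cP. apply Rplus_le_le_0_compat; apply Rmult_le_pos; try lra.
    - left; apply Rinv_0_lt_compat. apply pow_lt; lra.
    - left; apply Rinv_0_lt_compat; lra. }
  set (k := kap mu s2 C0) in *. set (P := cP mu s2 C0) in *.
  assert (Hk : k = 2 * P / s2 + 1) by reflexivity.
  assert (Hk0 : 1 <= k). { rewrite Hk. assert (0 <= 2*P/s2) by (apply Rmult_le_pos; [lra|left; apply Rinv_0_lt_compat; lra]). lra. }
  assert (Hb1 : beta <= mu) by (eapply Rle_trans; [apply Hb| apply Rmin_l]).
  assert (Hb2 : beta <= tau*s2/4) by (eapply Rle_trans; [apply Hb| eapply Rle_trans; [apply Rmin_r|apply Rmin_l]]).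
  assert (Hb3 : beta <= 1/(k*s2)) by (eapply Rle_trans; [apply Hb| eapply Rle_trans; [apply Rmin_r|apply Rmin_r]]).
  assert (Hkb : k * beta <= 1/s2).
  { apply Rmult_le_compat_l with (r := k) in Hb3; [|lra].
    replace (k * (1 / (k*s2))) with (1/s2) in Hb3 by (field; lra). exact Hb3. }
  assert (H4 : 4*beta/s2 <= tau).
  { apply Rmult_le_compat_l with (r := 4/s2) in Hb2; [|left; apply Rmult_lt_0_compat; [lra|apply Rinv_0_lt_compat; lra]].
    replace (4/s2*(tau*s2/4)) with tau in Hb2 by (field; lra). lra. }
  assert (Hb0 : 0 < beta) by lra.
  assert (Hkb2 : 0 <= k * beta^2 <= beta / s2).
  { split; [apply Rmult_le_pos; [lra| apply pow_le; lra]|].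
    replace (k*beta^2) with ((k*beta)*beta) by ring. replace (beta/s2) with ((1/s2)*beta) by (field; lra).
    apply Rmult_le_compat_r; lra. }
  assert (Hbs : 0 < beta / s2) by (apply Rdiv_lt_0_compat; lra).
  assert (Key : forall t, 0 < t <= 4*beta/s2 ->
     Rabs (D t - (-beta*t + s2/2*t^2)) <= t * beta^2 * P).
  { intros t Ht. unfold D.
    eapply Rle_trans; [apply (D_bound F mu s2 C0 beta t); try lra; apply HF; lra|].
    fold (cA mu C0).
    assert (Ht2 : t^2 <= 16*beta^2/s2^2).
    { replace (16*beta^2/s2^2) with ((4*beta/s2)^2) by (field; lra). apply pow_incr; lra. }
    assert (E1 : cA mu C0 * t^3 <= t * beta^2 * (16 * cA mu C0 / s2^2)).
    { replace (cA mu C0 * t^3) with (cA mu C0 * t * t^2) by ring.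
      replace (t * beta^2 * (16 * cA mu C0 / s2^2)) with (cA mu C0 * t * (16*beta^2/s2^2)) by (field; lra).
      apply Rmult_le_compat_l; [nra|exact Ht2]. }
    assert (E2 : 2*mu*beta*t^2 <= t * beta^2 * (8*mu/s2)).
    { replace (2*mu*beta*t^2) with ((2*mu*beta*t)*t) by ring.
      replace (t * beta^2 * (8*mu/s2)) with ((2*mu*beta*t)*(4*beta/s2)) by (field; lra).
      apply Rmult_le_compat_l; [|lra]. repeat apply Rmult_le_pos; lra. }
    unfold P, cP. lra. }
  assert (Htlo : 0 < tlo).
  { unfold tlo. assert (2*beta/s2 = 2*(beta/s2)) by (field; lra). lra. }
  assert (Hthi : thi <= 4*beta/s2).
  { unfold thi. assert (4*beta/s2 = 4*(beta/s2)) by (field; lra). assert (2*beta/s2 = 2*(beta/s2)) by (field; lra). lra. }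
  assert (0 < k*beta^2) by (apply Rmult_lt_0_compat; [lra| apply pow_lt; lra]).
  split; [|split; [|split; [exact Htlo|split; [unfold tlo, thi; lra| lra]]]].
  - intros t Ht.
    assert (Ht' : 0 < t <= 4*beta/s2) by (unfold tlo in Ht; lra).
    specialize (Key t Ht'). apply Rabs_le_inv in Key.
    assert (Q : -beta + s2/2*t + beta^2*P <= - beta^2 * s2/2).
    { assert (HH : s2/2*t <= s2/2*tlo) by (apply Rmult_le_compat_l; lra).
      unfold tlo in HH. rewrite Hk in HH.
      replace (s2 / 2 * (2 * beta / s2 - (2 * P / s2 + 1) * beta ^ 2)) with (beta - beta^2*P - beta^2*s2/2) in HH by (field; lra).
      lra. }
    assert (t * (-beta + s2/2*t + beta^2*P) <= t * (- beta^2*s2/2)) by (apply Rmult_le_compat_l; lra).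
    assert (0 < t * (beta^2*s2/2)).
    { apply Rmult_lt_0_compat; [lra|]. apply Rmult_lt_0_compat; [|lra]. apply Rmult_lt_0_compat; [apply pow_lt; lra|lra]. }
    nra.
  - assert (Ht' : 0 < thi <= 4*beta/s2) by (split; [unfold thi, tlo in *; lra| lra]).
    specialize (Key thi Ht'). apply Rabs_le_inv in Key.
    assert (Q : -beta + s2/2*thi - beta^2*P = beta^2 * s2/2).
    { unfold thi. rewrite Hk. field. lra. }
    assert (0 < thi * (beta^2*s2/2)).
    { apply Rmult_lt_0_compat; [lra|]. apply Rmult_lt_0_compat; [|lra]. apply Rmult_lt_0_compat; [apply pow_lt; lra|lra]. }
    assert (thi * (-beta + s2/2*thi - beta^2*P) = thi * (beta^2 * s2/2)) by (rewrite Q; ring).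
    nra.
Qed.


Lemma pow_lt_s (a b : R) (n : nat) : 0 <= a < b -> (1 <= n)%nat -> a ^ n < b ^ n.
Proof.
  intros Hab Hn. induction n as [|n IH]; [lia|].
  destruct n as [|n]. { simpl; lra. }
  specialize (IH ltac:(lia)).
  change (a * a ^ S n < b * b ^ S n).
  assert (0 <= a ^ S n) by (apply pow_le; lra). nra.
Qed.

Lemma pow_le_inv (a b : R) (n : nat) : 0 <= a -> 0 <= b -> (1 <= n)%nat -> a ^ n <= b ^ n -> a <= b.
Proof.
  intros Ha Hb Hn H. destruct (Rle_lt_dec a b) as [h|h]; [exact h|].
  pose proof (pow_lt_s b a n ltac:(lra) Hn). lra.
Qed.

Lemma pow_lt_inv (a b : R) (n : nat) : 0 <= a -> 0 <= b -> (1 <= n)%nat -> a ^ n < b ^ n -> a < b.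
Proof.
  intros Ha Hb Hn H. destruct (Rlt_le_dec a b) as [h|h]; [exact h|].
  pose proof (pow_incr b a n ltac:(lra)). lra.
Qed.

Lemma exp_pow_INR (x : R) (k : nat) : exp x ^ k = exp (INR k * x).
Proof.
  induction k as [|k IH]. { simpl. rewrite Rmult_0_l, exp_0. reflexivity. }
  rewrite S_INR. simpl. rewrite IH, <- exp_plus. f_equal. ring.
Qed.

Lemma exp_diff (x : R) : Rabs (exp x - 1) <= Rabs x * exp (Rabs x).
Proof.
  destruct (Rle_lt_dec 0 x) as [h|h].
  - rewrite (Rabs_pos_eq x) by lra.
    assert (1 <= exp x) by (pose proof (exp_ineq1_le x); lra).
    rewrite Rabs_pos_eq by lra.
    pose proof (exp_ineq1_le (-x)). rewrite exp_Ropp in H0.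
    assert (0 < exp x) by apply exp_pos.
    assert (1 - x <= / exp x) by lra.
    apply Rmult_le_compat_r with (r := exp x) in H2; [|lra].
    rewrite Rinv_l in H2 by lra. nra.
  - rewrite (Rabs_left x) by lra.
    assert (exp x < 1) by (rewrite <- exp_0; apply exp_increasing; lra).
    rewrite Rabs_left by lra.
    pose proof (exp_ineq1_le x).
    assert (1 <= exp (-x)) by (pose proof (exp_ineq1_le (-x)); lra).
    nra.
Qed.

Lemma Cpow_R (x : R) (k : nat) : Cpow (RtoC x) k = RtoC (x ^ k).
Proof. rewrite RtoC_pow. reflexivity. Qed.

Lemma pgfC_R p (x : R) : pgfC p (RtoC x) = RtoC (pgf p x).
Proof.
  unfold pgfC.
  rewrite (Series_ext (fun k => p k * fst (Cpow (RtoC x) k)) (fun k => p k * x ^ k))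
    by (intros k; rewrite Cpow_R; reflexivity).
  rewrite (Series_ext (fun k => p k * snd (Cpow (RtoC x) k)) (fun k => 0))
    by (intros k; rewrite Cpow_R; simpl; ring).
  rewrite Series0. reflexivity.
Qed.


Lemma pgf_ge1 p x : is_distribution p -> 1 <= x -> Rbar_lt x (pgf_radius p) -> 1 <= pgf p x.
Proof.
  intros Hd Hx Hr. rewrite <- (pgf1 p Hd).
  apply (PS_mono p 1 x); [apply Hd| lra| exact Hr].
Qed.

Lemma real_zero p (n s : nat) (alpha t : R) : 0 < t -> Rbar_lt (exp t) (pgf_radius p) ->
  INR n * alpha = INR s -> pgf p (exp t) = exp (alpha * t) -> annulus_zero p n s (RtoC (exp t)).
Proof.
  intros Ht Hr Hn He. split; [|split].
  - rewrite Cmod_R, Rabs_pos_eq by (left; apply exp_pos).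
    rewrite <- exp_0. apply exp_increasing; lra.
  - rewrite Cmod_R, Rabs_pos_eq by (left; apply exp_pos). exact Hr.
  - rewrite pgfC_R, !Cpow_R. f_equal. rewrite He, !exp_pow_INR. f_equal. rewrite <- Hn. ring.
Qed.

Lemma Z0_sign p (n s : nat) (Z0 : C) (alpha : R) : is_distribution p ->
  (forall (r1 : R) (z : C), 0 < r1 -> Rbar_lt r1 (pgf_radius p) ->
      Cmod z = r1 -> z <> RtoC r1 -> Cmod (pgfC p z) < pgf p r1) ->
  (1 <= n)%nat -> INR n * alpha = INR s -> annulus_zero p n s Z0 ->
  exp (alpha * ln (Cmod Z0)) <= pgf p (exp (ln (Cmod Z0))) /\
  (Z0 <> RtoC (Cmod Z0) -> exp (alpha * ln (Cmod Z0)) < pgf p (exp (ln (Cmod Z0)))).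
Proof.
  intros Hd Haper Hn Hal [H1 [H2 H3]].
  set (rho := Cmod Z0) in *.
  assert (Hrho : exp (ln rho) = rho) by (apply exp_ln; lra).
  rewrite Hrho.
  assert (Hpow : exp (alpha * ln rho) ^ n = Cmod (pgfC p Z0) ^ n).
  { rewrite exp_pow_INR. replace (INR n * (alpha * ln rho)) with (INR s * ln rho) by (rewrite <- Hal; ring).
    rewrite <- exp_pow_INR, Hrho. unfold rho. rewrite <- !Cmod_pow, H3. reflexivity. }
  assert (Hg : 1 <= pgf p rho) by (apply pgf_ge1; auto; lra).
  assert (Hstrict : Z0 <> RtoC rho -> exp (alpha * ln rho) < pgf p rho).
  { intros Hne. pose proof (Haper rho Z0 ltac:(lra) H2 eq_refl Hne) as Ha.
    apply (pow_lt_inv _ _ n); [left; apply exp_pos| lra| exact Hn|].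
    rewrite Hpow. apply pow_lt_s; [split; [apply Cmod_ge_0|exact Ha]| exact Hn]. }
  split; [|exact Hstrict].
  destruct (classic (Z0 = RtoC rho)) as [Heq|Hne]; [|left; apply Hstrict; exact Hne].
  rewrite Heq, pgfC_R, Cmod_R, Rabs_pos_eq in Hpow by lra.
  apply (pow_le_inv _ _ n); [left; apply exp_pos| lra| exact Hn| rewrite Hpow; lra].
Qed.

Lemma ivt_zero p (n s : nat) (a tau tlo t' : R) :
  Rbar_lt (exp tau) (pgf_radius p) -> 0 < tlo < t' -> t' <= tau -> INR n * a = INR s ->
  pgf p (exp tlo) - exp (a * tlo) < 0 -> 0 < pgf p (exp t') - exp (a * t') ->
  exists z, annulus_zero p n s z /\ Cmod z < exp t'.
Proof.
  intros Hr Ht Ht' Hn Hlo Hhi.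
  destruct (Ranalysis5.IVT_interv (fun t => pgf p (exp t) - exp (a * t)) tlo t') as [z [Hz Hz0]];
    [| lra | exact Hlo | exact Hhi |].
  - intros x Hx. apply continuity_pt_minus.
    + apply (continuity_pt_comp exp (pgf p)).
      * apply derivable_continuous_pt, derivable_pt_exp.
      * change (continuity_pt (PSeries p) (exp x)). apply PSeries_continuity.
        apply (in_rad p (exp x) (exp tau)); [split; [left; apply exp_pos|]|exact Hr].
        destruct (Rle_lt_or_eq_dec x tau) as [h|h]; [lra| left; apply exp_increasing; exact h| rewrite h; lra].
    + apply (continuity_pt_comp (fun t => a * t) exp).
      * apply continuity_pt_mult; [apply continuity_pt_const; intros ? ?; reflexivity| apply continuity_pt_id].
      * apply derivable_continuous_pt, derivable_pt_exp.
  - assert (z <> t') by (intros ->; lra).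
    assert (Hzt : z < t') by lra.
    exists (RtoC (exp z)). split.
    + apply (real_zero p n s a z); [lra| |exact Hn| lra].
      apply Rbar_le_lt_trans with (exp tau); [|exact Hr]. simpl.
      left. apply exp_increasing. lra.
    + rewrite Cmod_R, Rabs_pos_eq by (left; apply exp_pos). apply exp_increasing; exact Hzt.
Qed.


Lemma kap_ge1 mu s2 C0 : 0 < mu -> 0 < s2 -> 0 <= C0 -> 1 <= kap mu s2 C0.
Proof.
  intros Hmu Hs HC. unfold kap.
  assert (HA : 0 <= cA mu C0).
  { unfold cA. pose proof (exp_pos mu). assert (0 <= mu^3) by (apply pow_le; lra). nra. }
  assert (HP : 0 <= cP mu s2 C0).
  { unfold cP. apply Rplus_le_le_0_compat; apply Rmult_le_pos; try lra.
    - left; apply Rinv_0_lt_compat. apply pow_lt; lra.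
    - left; apply Rinv_0_lt_compat; lra. }
  assert (0 <= 2 * cP mu s2 C0 / s2) by (apply Rmult_le_pos; [lra|left; apply Rinv_0_lt_compat; lra]).
  lra.
Qed.

Lemma bstar_pos mu s2 tau C0 : 0 < mu -> 0 < s2 -> 0 <= C0 -> 0 < tau -> 0 < bstar mu s2 tau C0.
Proof.
  intros. pose proof (kap_ge1 mu s2 C0 H H0 H1). unfold bstar.
  apply Rmin_glb_lt; [lra|]. apply Rmin_glb_lt.
  - apply Rmult_lt_0_compat; [nra|lra].
  - apply Rdiv_lt_0_compat; [lra|nra].
Qed.


Theorem proposition3p2 (p : nat -> R)
  (Hdist : is_distribution p)
  (Hrad : Rbar_lt 1 (pgf_radius p))
  (Hmu : 0 < pgf_mean p)
  (Hsig : 0 < pgf_var p)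
  (Haper : forall (r1 : R) (z : C),
      0 < r1 -> Rbar_lt r1 (pgf_radius p) ->
      Cmod z = r1 -> z <> RtoC r1 ->
      Cmod (pgfC p z) < pgf p r1)
  (glo ghi Llo Lhi : R)
  (Hg : 0 < glo <= ghi) (HL : 0 < Llo <= Lhi) :
  exists (K : R) (S0 : nat),
    forall (s n N : nat) (Z0 : C),
      (S0 <= s)%nat -> (1 <= n)%nat -> (1 <= s)%nat ->
      INR n * pgf_mean p < INR s ->
      pgf_degree_gt p (INR s / INR n) ->
      annulus_zero p n s Z0 ->
      (forall z : C, annulus_zero p n s z -> Cmod Z0 <= Cmod z) ->
      let gamma := sqrt (INR s) * (1 - INR n * pgf_mean p / INR s) in
      let L := INR (N + 1) / sqrt (INR s) in
      glo <= gamma <= ghi ->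
      Llo <= L <= Lhi ->
      Cmod (Cminus (Cinv (Cpow Z0 (N + 1)))
                   (RtoC (exp (- 2 * L * gamma * pgf_mean p / pgf_var p))))
        <= K * exp (- 2 * L * gamma * pgf_mean p / pgf_var p) / sqrt (INR s).
Proof.
  destruct (phi_taylor p Hdist Hrad) as [tau [C0 [Htau [Htr [HC0 HF]]]]].
  set (mu := pgf_mean p) in *. set (s2 := pgf_var p) in *.
  pose proof (bstar_pos mu s2 tau C0 Hmu Hsig HC0 ltac:(lra)) as Hbs.
  set (bs := bstar mu s2 tau C0) in *.
  pose proof (kap_ge1 mu s2 C0 Hmu Hsig HC0) as Hk.
  set (k := kap mu s2 C0) in *.
  set (W := 2*ghi + 2*mu*ghi/bs).
  assert (HW0 : 2*ghi <= W /\ 2*mu*ghi/bs <= W).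
  { assert (0 <= 2*mu*ghi/bs) by (apply Rmult_le_pos; [nra| left; apply Rinv_0_lt_compat; lra]). unfold W; lra. }
  destruct (INR_archimed 1 (W^2) ltac:(lra)) as [S0 HS0]. rewrite Rmult_1_r in HS0.
  set (K1 := 4*k*mu^2*ghi^2 + 4*mu*ghi^2/s2).
  set (K2 := Lhi * K1).
  assert (HK1 : 0 <= K1).
  { unfold K1. apply Rplus_le_le_0_compat.
    - assert (0 <= mu^2*ghi^2) by (apply Rmult_le_pos; apply pow_le; lra). nra.
    - apply Rmult_le_pos; [|left; apply Rinv_0_lt_compat; lra]. assert (0 <= ghi^2) by (apply pow_le; lra). nra. }
  assert (HK2 : 0 <= K2) by (unfold K2; nra).
  exists (K2 * exp K2), S0.
  intros s n N Z0 HS Hn Hs Hnmu Hdeg HZ Hmin gamma L Hgam HLL.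
  set (q := sqrt (INR s)) in *.
  assert (Hs0 : 1 <= INR s) by (apply (le_INR 1); exact Hs).
  assert (Hq2 : q * q = INR s) by (apply sqrt_sqrt; lra).
  assert (Hq1 : 1 <= q) by (unfold q; rewrite <- sqrt_1; apply sqrt_le_1; lra).
  assert (HqW : W <= q).
  { unfold q. rewrite <- (sqrt_pow2 W) by lra. apply sqrt_le_1; [apply pow_le; lra| lra|].
    apply Rle_trans with (INR S0); [lra| apply le_INR; exact HS]. }
  assert (Hgdef : gamma = q * (1 - INR n * mu / INR s)) by reflexivity.
  assert (Hn0 : 1 <= INR n) by (apply (le_INR 1); exact Hn).
  assert (Hnmu2 : INR n * mu = q * (q - gamma)).
  { rewrite Hgdef. rewrite <- Hq2. field. lra. }
  assert (Hgq : 2 * gamma <= q) by lra.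
  set (beta := INR s / INR n - mu).
  assert (Hal : INR n * (mu + beta) = INR s) by (unfold beta; field; lra).
  assert (Hbq : beta * (q - gamma) = mu * gamma).
  { unfold beta. rewrite <- Hq2.
    assert (INR n = q * (q - gamma) / mu) by (rewrite <- Hnmu2; field; lra).
    rewrite H. field. split; lra. }
  assert (Hb0 : 0 < beta).
  { assert (0 < mu * gamma) by nra. nra. }
  assert (Hbq2 : beta * q <= 2 * mu * gamma) by nra.
  assert (Hbbs : beta <= bs).
  { assert (2*mu*ghi <= bs * q).
    { destruct HW0 as [_ HW1]. assert (2*mu*ghi/bs <= q) by lra.
      apply Rmult_le_compat_l with (r := bs) in H; [|lra].
      replace (bs * (2*mu*ghi/bs)) with (2*mu*ghi) in H by (field; lra). exact H. }
    assert (beta * q <= bs * q) by nra. nra. }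
  set (dd := beta - mu * gamma / q).
  assert (Hdd : dd * q = beta * gamma) by (unfold dd; field_simplify; [nra| lra]).
  destruct (root_signs (fun t => pgf p (exp t)) mu s2 tau C0 beta Hmu Hsig HC0 Htau HF (conj Hb0 Hbbs))
    as [Hlo [Hhi [Htlo [Htlohi Hthi]]]].
  fold k in Hlo, Hhi, Htlo, Htlohi, Hthi.
  set (tlo := 2*beta/s2 - k*beta^2) in *. set (thi := 2*beta/s2 + k*beta^2) in *.
  destruct (Z0_sign p n s Z0 (mu+beta) Hdist Haper Hn Hal HZ) as [Hs1 Hs2].
  set (rho := Cmod Z0) in *. set (t0 := ln rho) in *.
  assert (Hrho1 : 1 < rho) by (apply HZ).
  assert (Hrho : exp t0 = rho) by (apply exp_ln; lra).
  assert (Ht0 : 0 < t0).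
  { destruct (Rlt_le_dec 0 t0) as [h|h]; [exact h|].
    assert (exp t0 <= exp 0) by (destruct (Rle_lt_or_eq_dec t0 0 h) as [h'|h']; [left; apply exp_increasing; exact h'| rewrite h'; lra]).
    rewrite exp_0 in H. lra. }
  assert (Htr2 : forall t, t <= tau -> Rbar_lt (exp t) (pgf_radius p)).
  { intros t ht. apply Rbar_le_lt_trans with (exp tau); [|exact Htr]. simpl.
    destruct (Rle_lt_or_eq_dec t tau ht) as [h'|h']; [left; apply exp_increasing; exact h'| rewrite h'; lra]. }
  assert (Hlow : tlo < t0).
  { destruct (Rlt_le_dec tlo t0) as [h|h]; [exact h|].
    specialize (Hlo t0 ltac:(lra)). simpl in Hlo. lra. }
  assert (Hlo0 : pgf p (exp tlo) - exp ((mu + beta) * tlo) < 0) by (apply (Hlo tlo); lra).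
  assert (Hup : t0 <= thi).
  { destruct (Rle_lt_dec t0 thi) as [h|h]; [exact h|].
    destruct (ivt_zero p n s (mu+beta) tau tlo thi Htr ltac:(lra) Hthi Hal Hlo0 Hhi) as [z [Hz Hzc]].
    specialize (Hmin z Hz). fold rho in Hmin.
    assert (exp thi < exp t0) by (apply exp_increasing; exact h). lra. }
  assert (HZr : Z0 = RtoC rho).
  { destruct (classic (Z0 = RtoC rho)) as [h|h]; [exact h|].
    specialize (Hs2 h). rewrite Hrho in Hs2.
    destruct (ivt_zero p n s (mu+beta) tau tlo t0 Htr ltac:(lra) ltac:(lra) Hal Hlo0) as [z [Hz Hzc]].
    { rewrite Hrho. lra. }
    specialize (Hmin z Hz). fold rho in Hmin. lra. }
  rewrite HZr, Cpow_R, <- RtoC_inv by (apply pow_nonzero; lra).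
  rewrite <- RtoC_minus, Cmod_R.
  rewrite <- Hrho, exp_pow_INR, <- exp_Ropp.
  set (Ev := - 2 * L * gamma * mu / s2).
  set (T := INR (N + 1) * t0).
  assert (Hsplit : exp (- T) - exp Ev = exp Ev * (exp (- T - Ev) - 1)).
  { rewrite Rmult_minus_distr_l, <- exp_plus, Rmult_1_r. f_equal. f_equal. ring. }
  rewrite Hsplit, Rabs_mult, (Rabs_pos_eq (exp Ev)) by (left; apply exp_pos).
  assert (HLq : INR (N+1) = L * q).
  { assert (Hgq0 : 0 < q) by lra. unfold L. fold q. field. lra. }
  assert (Hx : Rabs (t0 - 2*beta/s2) <= k * beta^2).
  { apply Rabs_le. unfold tlo, thi in *. lra. }
  assert (Hbq3 : beta <= 2*mu*ghi/q).
  { apply Rmult_le_reg_r with q; [lra|]. replace (2*mu*ghi/q*q) with (2*mu*ghi) by (field; lra). nra. }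
  assert (Hbeta2 : k * beta^2 <= 4*k*mu^2*ghi^2/(q*q)).
  { replace (4*k*mu^2*ghi^2/(q*q)) with (k * (2*mu*ghi/q)^2) by (field; lra).
    apply Rmult_le_compat_l; [lra|]. apply pow_incr; lra. }
  assert (Hdd2 : 0 <= dd <= 2*mu*ghi^2/(q*q)).
  { split.
    - apply Rmult_le_reg_r with q; [lra|]. rewrite Hdd. nra.
    - apply Rmult_le_reg_r with q; [lra|]. rewrite Hdd.
      replace (2*mu*ghi^2/(q*q)*q) with (2*mu*ghi/q * ghi) by (field; lra).
      apply Rmult_le_compat; lra. }
  assert (Hcore : Rabs (t0 - 2*mu*gamma/(s2*q)) <= K1/(q*q)).
  { replace (t0 - 2*mu*gamma/(s2*q)) with ((t0 - 2*beta/s2) + 2/s2 * dd) by (unfold dd; field; lra).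
    eapply Rle_trans; [apply Rabs_triang|].
    rewrite Rabs_mult, (Rabs_pos_eq dd), (Rabs_pos_eq (2/s2)) by (try lra; apply Rdiv_le_0_compat; lra).
    assert (2/s2*dd <= 2/s2 * (2*mu*ghi^2/(q*q))) by (apply Rmult_le_compat_l; [apply Rdiv_le_0_compat; lra| lra]).
    replace (K1/(q*q)) with (4*k*mu^2*ghi^2/(q*q) + 2/s2 * (2*mu*ghi^2/(q*q))) by (unfold K1; field; split; lra).
    lra. }
  assert (HTE : Rabs (- T - Ev) <= K2 / q).
  { replace (- T - Ev) with (- (L * q) * (t0 - 2*mu*gamma/(s2*q))) by (unfold T, Ev; rewrite HLq; field; split; lra).
    rewrite Rabs_mult, Rabs_Ropp, (Rabs_pos_eq (L*q)) by nra.
    assert (0 <= Rabs (t0 - 2 * mu * gamma / (s2 * q))) by apply Rabs_pos.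
    apply Rle_trans with (L * q * (K1/(q*q))).
    { apply Rmult_le_compat_l; [nra|exact Hcore]. }
    replace (L*q*(K1/(q*q))) with (L * K1 / q) by (field; lra).
    unfold K2. apply Rmult_le_compat_r; [left; apply Rinv_0_lt_compat; lra|]. nra. }
  assert (HK2q : K2 / q <= K2).
  { apply Rmult_le_reg_r with q; [lra|]. replace (K2/q*q) with K2 by (field; lra). nra. }
  pose proof (exp_diff (- T - Ev)) as Hed.
  assert (Hee : exp (Rabs (- T - Ev)) <= exp K2).
  { destruct (Rle_lt_or_eq_dec (Rabs (-T-Ev)) K2 ltac:(lra)) as [h|h]; [left; apply exp_increasing; exact h| rewrite h; lra]. }
  assert (Hprod : Rabs (- T - Ev) * exp (Rabs (- T - Ev)) <= K2 / q * exp K2).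
  { apply Rmult_le_compat; [apply Rabs_pos| left; apply exp_pos| exact HTE| exact Hee]. }
  assert (Hfin : Rabs (exp (- T - Ev) - 1) <= K2 * exp K2 / q).
  { replace (K2 * exp K2 / q) with (K2/q*exp K2) by (field; lra). lra. }
  replace (K2 * exp K2 * exp Ev / q) with (exp Ev * (K2 * exp K2 / q)) by (field; lra).
  apply Rmult_le_compat_l; [left; apply exp_pos| exact Hfin].
Qed.
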